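(* For every set of formulas $\Gamma$ and every formula $\alpha$: if $\Gamma\vDash_{\mathcal{M}_1^0}\alpha$ then $\Gamma\vdash_{L_1^0}\alpha$.
   Context: Formulas are built from a countable set of propositional variables using the unary connectives $\neg$ and $\circ$ and the binary connectives $\land,\lor,\to$. Write $\circ^0\alpha=\alpha$, $\circ^{m+1}\alpha=\circ(\circ^m\alpha)$. The Hilbert calculus mbC has as axiom schemas those of a standard axiomatization of positive classical propositional logic in $\land,\lor,\to$, plus (TND) $\alpha\lor\neg\alpha$ and (bc1) $\circ\alpha\to(\alpha\to(\neg\alpha\to\beta))$; its only rule is modus ponens. mbCciw is mbC plus (ciw) $\circ\alpha\lor(\alpha\land\neg\alpha)$. $L_1^0$ is mbCciw plus the schema $\circ\circ\circ\alpha$. $\Gamma\vdash_L\alpha$ means $\alpha$ is derivable from $\Gamma$ in $L$. Semantics: on $\{0,1\}$ use the Boolean operations $\land,\lor,\to,\sim$. Let $\mathbb{B}_1^0=\{x\in\{0,1\}^3: x_1\lor x_2=1,\ x_3\lor\sim(x_1\land x_2)=1\}$. The multialgebra $\mathcal{B}_1^0$ has $x\# y=\{z\in\mathbb{B}_1^0: z_1=x_1\# y_1\}$ for $\#\in\{\land,\lor,\to\}$, $\neg x=\{z\in\mathbb{B}_1^0: z_1=x_2\}$, $\circ x=\{(\sim(x_1\land x_2),x_3,x_3\land\sim(x_1\land x_2))\}$. $D_1^0=\{x: x_1=1\}$, $\mathcal{M}_1^0=(\mathcal{B}_1^0,D_1^0)$. A valuation over $\mathcal{M}_1^0$ is a map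 $h$ from formulas to $\mathbb{B}_1^0$ with $h(\alpha\#\beta)\in h(\alpha)\# h(\beta)$, $h(\neg\alpha)\in\neg h(\alpha)$, $h(\circ\alpha)\in\circ h(\alpha)$. $\Gamma\vDash_{\mathcal{M}_1^0}\alpha$ iff every valuation $h$ with $h[\Gamma]\subseteq D_1^0$ has $h(\alpha)\in D_1^0$. *)

(* Defs.v *)
From Stdlib Require Import Bool.

Inductive formula : Type :=
| Var  : nat -> formula
| Neg  : formula -> formula
| Circ : formula -> formula
| And  : formula -> formula -> formula
| Or   : formula -> formula -> formula
| Imp  : formula -> formula -> formula.

Fixpoint circ_iter (m : nat) (a : formula) : formula :=
  match m with
  | O => a
  | S m' => Circ (circ_iter m' a)
  end.

(** * Hilbert calculus L_1^0 = mbC + (ciw) + circ circ circ alpha *)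
Inductive axiom_L10 : formula -> Prop :=
| Ax1 a b : axiom_L10 (Imp a (Imp b a))
| Ax2 a b c : axiom_L10 (Imp (Imp a b) (Imp (Imp a (Imp b c)) (Imp a c)))
| Ax3 a b : axiom_L10 (Imp a (Imp b (And a b)))
| Ax4 a b : axiom_L10 (Imp (And a b) a)
| Ax5 a b : axiom_L10 (Imp (And a b) b)
| Ax6 a b : axiom_L10 (Imp a (Or a b))
| Ax7 a b : axiom_L10 (Imp b (Or a b))
| Ax8 a b c : axiom_L10 (Imp (Imp a c) (Imp (Imp b c) (Imp (Or a b) c)))
| Ax9 a b : axiom_L10 (Or a (Imp a b))
| AxTND a : axiom_L10 (Or a (Neg a))
| Axbc1 a b : axiom_L10 (Imp (Circ a) (Imp a (Imp (Neg a) b)))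
| Axciw a : axiom_L10 (Or (Circ a) (And a (Neg a)))
| AxCirc3 a : axiom_L10 (circ_iter 3 a).

Inductive derivable (Gamma : formula -> Prop) : formula -> Prop :=
| d_hyp a : Gamma a -> derivable Gamma a
| d_ax a : axiom_L10 a -> derivable Gamma a
| d_mp a b : derivable Gamma a -> derivable Gamma (Imp a b) -> derivable Gamma b.

Record triple : Type := mkT { x1 : bool; x2 : bool; x3 : bool }.

Definition inB (x : triple) : Prop :=
  (x1 x || x2 x) = true /\ (x3 x || negb (x1 x && x2 x)) = true.

(** multioperations, as predicates on triples (sets of values) *)
Definition m_and (x y z : triple) : Prop := inB z /\ x1 z = (x1 x && x1 y).
Definition m_or  (x y z : triple) : Prop := inB z /\ x1 z = (x1 x || x1 y).
Definition m_imp (x y z : triple) : Prop := inB z /\ x1 z = implb (x1 x) (x1 y).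
Definition m_neg (x z : triple) : Prop := inB z /\ x1 z = x2 x.
Definition m_circ (x z : triple) : Prop :=
  z = mkT (negb (x1 x && x2 x)) (x3 x) (x3 x && negb (x1 x && x2 x)).

Definition designated (x : triple) : Prop := x1 x = true.

Definition valuation (h : formula -> triple) : Prop :=
  (forall a, inB (h a)) /\
  (forall a b, m_and (h a) (h b) (h (And a b))) /\
  (forall a b, m_or  (h a) (h b) (h (Or a b))) /\
  (forall a b, m_imp (h a) (h b) (h (Imp a b))) /\
  (forall a, m_neg (h a) (h (Neg a))) /\
  (forall a, m_circ (h a) (h (Circ a))).

Definition sem_conseq (Gamma : formula -> Prop) (a : formula) : Prop :=
  forall h, valuation h -> (forall g, Gamma g -> designated (h g)) -> designated (h a).

(* Main.v *)
Require Import Defs.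
From Stdlib Require Import Bool List Classical ClassicalEpsilon Lia Arith.
Import ListNotations.

Definition Sub (A B : formula -> Prop) := forall q, A q -> B q.
Definition ins (A : formula -> Prop) p := fun r => A r \/ r = p.

Lemma der_mono A B a : Sub A B -> derivable A a -> derivable B a.
Proof. intros S H; induction H; [apply d_hyp; apply S; auto | apply d_ax; auto | apply (d_mp _ a b); auto]. Qed.

Lemma der_id D p : derivable D (Imp p p).
Proof.
  eapply d_mp. apply d_ax, (Ax1 p (Imp p p)).
  eapply d_mp. apply d_ax, (Ax1 p p).
  apply d_ax, (Ax2 p (Imp p p) p).
Qed.

Lemma deduction D p b : derivable (ins D p) b -> derivable D (Imp p b).
Proof.
  intro H; induction H.
  - destruct H as [H|H].
    + eapply d_mp. apply d_hyp, H. apply d_ax, Ax1.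
    + subst; apply der_id.
  - eapply d_mp. apply d_ax, H. apply d_ax, Ax1.
  - apply (d_mp _ _ _ IHderivable2). apply (d_mp _ _ _ IHderivable1). apply d_ax, Ax2.
Qed.

Lemma cut D p a : derivable D p -> derivable (ins D p) a -> derivable D a.
Proof.
  intros Hp H; induction H.
  - destruct H as [H|H]; [apply d_hyp; auto | subst; auto].
  - apply d_ax; auto.
  - apply (d_mp _ a b); auto.
Qed.

Fixpoint enum (n : nat) : list formula :=
  match n with
  | 0 => [Var 0]
  | S n => let l := enum n in
      Var (S n) :: l ++ map Neg l ++ map Circ l ++
      flat_map (fun a => flat_map (fun b => [And a b; Or a b; Imp a b]) l) l
  end.

Lemma enum_S n a : In a (enum n) -> In a (enum (S n)).
Proof. intro H; simpl; right; apply in_or_app; auto. Qed.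

Lemma enum_mono n m a : n <= m -> In a (enum n) -> In a (enum m).
Proof. induction 1; auto using enum_S. Qed.

Lemma enum_bin n a b : In a (enum n) -> In b (enum n) ->
  In (And a b) (enum (S n)) /\ In (Or a b) (enum (S n)) /\ In (Imp a b) (enum (S n)).
Proof.
  intros Ha Hb.
  assert (K : forall c, In c [And a b; Or a b; Imp a b] -> In c (enum (S n))).
  { intros c Hc. simpl. right. apply in_or_app; right. apply in_or_app; right.
    apply in_or_app; right. apply in_flat_map. exists a; split; auto.
    apply in_flat_map. exists b; split; auto. }
  repeat split; apply K; simpl; auto.
Qed.

Lemma enum_complete p : exists n, In p (enum n).
Proof.
  induction p.
  - exists n; destruct n; simpl; auto.
  - destruct IHp as [n H]; exists (S n); simpl; right; apply in_or_app; right;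
      apply in_or_app; left; apply in_map; auto.
  - destruct IHp as [n H]; exists (S n); simpl; right; apply in_or_app; right;
      apply in_or_app; right; apply in_or_app; left; apply in_map; auto.
  - destruct IHp1 as [n H1], IHp2 as [m H2]; exists (S (max n m)).
    refine (proj1 (enum_bin _ _ _ _ _)); [apply (enum_mono n) | apply (enum_mono m)]; auto; lia.
  - destruct IHp1 as [n H1], IHp2 as [m H2]; exists (S (max n m)).
    refine (proj1 (proj2 (enum_bin _ _ _ _ _))); [apply (enum_mono n) | apply (enum_mono m)]; auto; lia.
  - destruct IHp1 as [n H1], IHp2 as [m H2]; exists (S (max n m)).
    refine (proj2 (proj2 (enum_bin _ _ _ _ _))); [apply (enum_mono n) | apply (enum_mono m)]; auto; lia.
Qed.

Definition add (al : formula) (D : formula -> Prop) (p : formula) : formula -> Prop :=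
  fun q => D q \/ (q = p /\ ~ derivable (ins D p) al).

Lemma fold_sub al l D q : D q -> fold_left (add al) l D q.
Proof. revert D; induction l; simpl; intros D H; auto. apply IHl; left; auto. Qed.

Lemma fold_cons al l D : ~ derivable D al -> ~ derivable (fold_left (add al) l D) al.
Proof.
  revert D; induction l as [|x l IH]; simpl; intros D H; auto.
  apply IH. intro Hd. destruct (classic (derivable (ins D x) al)) as [C|C].
  - apply H. eapply der_mono; [|exact Hd]. intros q [Hq|[-> Hq]]; tauto.
  - apply C. eapply der_mono; [|exact Hd]. intros q [Hq|[-> Hq]]; unfold ins; tauto.
Qed.

Lemma fold_in al p l : forall D T, Sub (fold_left (add al) l D) T -> In p l ->
  ~ derivable (ins T p) al -> fold_left (add al) l D p.
Proof.
  induction l as [|x l IH]; simpl; intros D T S Hi Hn; [contradiction|].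
  destruct Hi as [->|Hi].
  - apply fold_sub. right; split; auto. intro Hd; apply Hn.
    eapply der_mono; [|exact Hd]. intros q [Hq|Hq]; [left; apply S, fold_sub; left; auto|right; auto].
  - eapply IH; eauto.
Qed.

Fixpoint chain (al : formula) (G : formula -> Prop) (n : nat) : formula -> Prop :=
  match n with
  | 0 => G
  | S n => fold_left (add al) (enum n) (chain al G n)
  end.

Lemma chain_mono al G n m : n <= m -> Sub (chain al G n) (chain al G m).
Proof. induction 1; intros q Hq; auto. simpl. apply fold_sub; auto. Qed.

Lemma chain_cons al G n : ~ derivable G al -> ~ derivable (chain al G n) al.
Proof. intro H; induction n; simpl; auto. apply fold_cons; auto. Qed.

Definition Delta al G q := exists n, chain al G n q.

Lemma compact al G a : derivable (Delta al G) a -> exists n, derivable (chain al G n) a.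
Proof.
  intro H; induction H.
  - destruct H as [n H]; exists n; apply d_hyp; auto.
  - exists 0; apply d_ax; auto.
  - destruct IHderivable1 as [n1 H1], IHderivable2 as [n2 H2].
    exists (max n1 n2). apply (d_mp _ a b).
    + eapply der_mono; [|exact H1]; apply chain_mono; lia.
    + eapply der_mono; [|exact H2]; apply chain_mono; lia.
Qed.

Lemma Delta_cons al G : ~ derivable G al -> ~ derivable (Delta al G) al.
Proof. intros H Hd. destruct (compact _ _ _ Hd) as [n Hn]. eapply chain_cons; eauto. Qed.

Lemma Delta_max al G p : ~ derivable (ins (Delta al G) p) al -> Delta al G p.
Proof.
  intro H. destruct (enum_complete p) as [n Hn]. exists (S n). simpl.
  eapply fold_in; eauto. intros q Hq. exists (S n); auto.
Qed.

Lemma closed D al : ~ derivable D al -> (forall p, ~ derivable (ins D p) al -> D p) ->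
  forall p, derivable D p -> D p.
Proof. intros ND MX p Hp. apply MX. intro H. apply ND. eapply cut; eauto. Qed.

Lemma notin D al : (forall p, ~ derivable (ins D p) al -> D p) ->
  forall p, ~ D p -> derivable D (Imp p al).
Proof. intros MX p Hp. apply deduction. apply NNPP. intro C. apply Hp, MX, C. Qed.

Definition bb (P : Prop) : bool := if excluded_middle_informative P then true else false.
Lemma bbT P : bb P = true <-> P.
Proof. unfold bb; destruct (excluded_middle_informative P); split; intros; auto; discriminate || contradiction. Qed.
Lemma bb_iff P Q : (P <-> Q) -> bb P = bb Q.
Proof. intro H; unfold bb; destruct (excluded_middle_informative P), (excluded_middle_informative Q); tauto. Qed.
Lemma bb_and P Q : bb (P /\ Q) = bb P && bb Q.
Proof. unfold bb; destruct (excluded_middle_informative P), (excluded_middle_informative Q), (excluded_middle_informative (P/\Q)); simpl; tauto. Qed.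
Lemma bb_or P Q : bb (P \/ Q) = bb P || bb Q.
Proof. unfold bb; destruct (excluded_middle_informative P), (excluded_middle_informative Q), (excluded_middle_informative (P\/Q)); simpl; tauto. Qed.
Lemma bb_imp P Q : bb (P -> Q) = implb (bb P) (bb Q).
Proof. unfold bb; destruct (excluded_middle_informative P), (excluded_middle_informative Q), (excluded_middle_informative (P->Q)); simpl; tauto. Qed.
Lemma bb_not P : bb (~ P) = negb (bb P).
Proof. unfold bb; destruct (excluded_middle_informative P), (excluded_middle_informative (~P)); simpl; tauto. Qed.

Theorem theorem6 (Gamma : formula -> Prop) (alpha : formula) :
  sem_conseq Gamma alpha -> derivable Gamma alpha.
Proof.
  intro Hs. apply NNPP; intro NG.
  set (D := Delta alpha Gamma).
  assert (ND : ~ derivable D alpha) by (apply Delta_cons; auto).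
  assert (MX : forall p, ~ derivable (ins D p) alpha -> D p) by (intros; apply Delta_max; auto).
  pose proof (closed D alpha ND MX) as CL.
  pose proof (notin D alpha MX) as NI.
  assert (AX : forall a, axiom_L10 a -> D a) by (intros; apply CL, d_ax; auto).
  assert (MP : forall a b, D a -> D (Imp a b) -> D b)
    by (intros a b Ha Hb; apply CL; apply (d_mp _ a b); apply d_hyp; auto).
  assert (Hand : forall a b, D (And a b) <-> D a /\ D b).
  { intros a b; split.
    - intro H; split; eapply MP; eauto using AX, Ax4, Ax5.
    - intros [Ha Hb]. eapply MP; [exact Hb|]. eapply MP; [exact Ha|]. apply AX, Ax3. }
  assert (OrE : forall a b, D (Or a b) -> ~ D a -> ~ D b -> False).
  { intros a b H Ha Hb. apply ND. eapply d_mp. apply d_hyp, H.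
    eapply d_mp. apply NI, Hb. eapply d_mp. apply NI, Ha. apply d_ax, Ax8. }
  assert (Hor : forall a b, D (Or a b) <-> D a \/ D b).
  { intros a b; split.
    - intro H. destruct (classic (D a)); auto. destruct (classic (D b)); auto.
      exfalso; eapply OrE; eauto.
    - intros [H|H]; eapply MP; eauto using AX, Ax6, Ax7. }
  assert (Himp : forall a b, D (Imp a b) <-> (D a -> D b)).
  { intros a b; split.
    - intros H Ha; eapply MP; eauto.
    - intro H. destruct (classic (D a)) as [Ha|Ha].
      + eapply MP. apply H, Ha. apply AX, Ax1.
      + apply NNPP; intro Hn. eapply OrE; [apply AX, (Ax9 a b)| |]; eauto. }
  assert (TND : forall a, D a \/ D (Neg a)) by (intro a; apply Hor, AX, AxTND).
  assert (Hcirc : forall q, D (Circ q) <-> ~ (D q /\ D (Neg q))).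
  { intro q; split.
    - intros Hc [H1 H2]. apply ND. apply d_hyp.
      eapply MP; [exact H2|]. eapply MP; [exact H1|]. eapply MP; [exact Hc|]. apply AX, Axbc1.
    - intro H. destruct (proj1 (Hor _ _) (AX _ (Axciw q))) as [C|C]; auto.
      apply Hand in C; tauto. }
  assert (H3 : forall p, D (circ_iter 3 p)) by (intro; apply AX, AxCirc3).
  set (h := fun p => mkT (bb (D p)) (bb (D (Neg p))) (bb (D (Neg (Circ p))))).
  assert (Hin : forall p, inB (h p)).
  { intro p; unfold inB, h; simpl. split.
    - rewrite <- bb_or. apply bbT, TND.
    - rewrite <- bb_and, <- bb_not, <- bb_or. apply bbT.
      destruct (classic (D p /\ D (Neg p))) as [C|C]; auto. left.
      destruct (TND (Circ p)) as [T|T]; auto. exfalso; apply Hcirc in T; tauto. }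
  assert (Hval : valuation h).
  { split; [exact Hin|]. split; [intros a b; split; [apply Hin|]|].
    { simpl. rewrite <- bb_and. apply bb_iff, Hand. }
    split; [intros a b; split; [apply Hin|]|].
    { simpl. rewrite <- bb_or. apply bb_iff, Hor. }
    split; [intros a b; split; [apply Hin|]|].
    { simpl. rewrite <- bb_imp. apply bb_iff, Himp. }
    split; [intros a; split; [apply Hin|reflexivity]|].
    intro a.
    - unfold m_circ, h; simpl. f_equal.
      + rewrite <- bb_and, <- bb_not. apply bb_iff, Hcirc.
      + rewrite <- bb_and, <- bb_not, <- bb_and. apply bb_iff.
        specialize (H3 a); simpl in H3. apply Hcirc in H3.
        split.
        * intro N. assert (~ D (Circ (Circ a))) by tauto.
          rewrite Hcirc in H. apply NNPP in H. destruct H as [A B].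
          split; auto. apply Hcirc; auto.
        * intros [A B]. assert (~ D (Circ (Circ a))).
          { rewrite Hcirc. intro C; apply C. split; auto. apply Hcirc; auto. }
          destruct (TND (Circ (Circ a))); tauto. }
  assert (Hg : forall g, Gamma g -> designated (h g)).
  { intros g Hg. unfold designated, h; simpl. apply bbT. exists 0; auto. }
  specialize (Hs h Hval Hg). unfold designated, h in Hs; simpl in Hs.
  apply (proj1 (bbT _)) in Hs. apply ND, d_hyp, Hs.
Qed.
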